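(* Assume $D_i>0$ for all $i\in\mathcal D$. Then all minimum-delay equilibrium solutions of the instance have the same vector of delays $(\delta_i)_{i\in\mathcal D}$, where $\delta_i=\min_{j}(\ell_{ij}+\beta_j)$.
   Context: An instance consists of finite sets $\mathcal D$ (demand nodes) and $\mathcal F$ (FCs), finite nonnegative travel times $\ell_{ij}$, demands $D_i\ge0$ and capacities $C_j\ge0$ with $\sum_iD_i\le\sum_jC_j$. An assignment is $x\in\mathbb R_{\ge0}^{\mathcal D\times\mathcal F}$ with $\sum_jx_{ij}=D_i$ for all $i$ and $\sum_ix_{ij}\le C_j$ for all $j$. An equilibrium solution is a pair $(x,\beta)$ with $x$ an assignment and $\beta\in\mathbb R^{\mathcal F}_{\ge0}$ such that $x_{ij}>0$ only if $j\in\arg\min_{j'}(\ell_{ij'}+\beta_{j'})$, and $\beta_j=0$ whenever $\sum_ix_{ij}<C_j$. The delay of demand $i$ is $\delta_i=\min_j(\ell_{ij}+\beta_j)$; the delay of the solution is $\sum_iD_i\delta_i$, and a minimum-delay equilibrium solution minimizes this over all equilibrium solutions. *)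

(* Defs.v *)
From mathcomp Require Import all_boot all_order all_algebra.
Set Implicit Arguments. Unset Strict Implicit. Unset Printing Implicit Defensive.
Import Order.TTheory GRing.Theory Num.Theory.
Local Open Scope ring_scope.

Section Defs.
Variables (R : realFieldType) (Dn Fc : finType).
(* travel times l i j, demands Dm i, capacities C j *)
Variables (l : Dn -> Fc -> R) (Dm : Dn -> R) (C : Fc -> R).

Definition assignment (x : Dn -> Fc -> R) : Prop :=
  (forall i j, 0 <= x i j) /\
  (forall i, \sum_(j : Fc) x i j = Dm i) /\
  (forall j, \sum_(i : Dn) x i j <= C j).

Definition equilibrium (x : Dn -> Fc -> R) (beta : Fc -> R) : Prop :=
  assignment x /\
  (forall j, 0 <= beta j) /\
  (forall i j, 0 < x i j -> forall j', l i j + beta j <= l i j' + beta j') /\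
  (forall j, \sum_(i : Dn) x i j < C j -> beta j = 0).

(* delta_i = min_j (l i j + beta j)  (0 by convention if there is no FC) *)
Definition delay (beta : Fc -> R) (i : Dn) : R :=
  match [pick j : Fc] with
  | Some j0 => \big[Num.min/(l i j0 + beta j0)]_(j : Fc) (l i j + beta j)
  | None => 0
  end.

Definition total_delay (beta : Fc -> R) : R :=
  \sum_(i : Dn) Dm i * delay beta i.

Definition min_delay_equilibrium (x : Dn -> Fc -> R) (beta : Fc -> R) : Prop :=
  equilibrium x beta /\
  forall x' beta', equilibrium x' beta' -> total_delay beta <= total_delay beta'.
End Defs.

(* Main.v *)
Require Import Defs.
From mathcomp Require Import all_boot all_order all_algebra.
From mathcomp Require Import lra.
Import Order.TTheory GRing.Theory Num.Theory.
Local Open Scope ring_scope.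

Section Helpers.
Variables (R : realFieldType) (Dn Fc : finType).
Variables (l : Dn -> Fc -> R) (Dm : Dn -> R) (C : Fc -> R).

Definition cost (x : Dn -> Fc -> R) := \sum_(i : Dn) \sum_(j : Fc) l i j * x i j.
Definition gd (d : Dn -> R) (b : Fc -> R) :=
  \sum_(i : Dn) Dm i * d i - \sum_(j : Fc) C j * b j.
Definition S1 x d b := \sum_(i : Dn) \sum_(j : Fc) (l i j + b j - d i) * x i j.
Definition S2 (x : Dn -> Fc -> R) b := \sum_(j : Fc) b j * (C j - \sum_(i : Dn) x i j).

Lemma slack_id x d b : (forall i, \sum_(j : Fc) x i j = Dm i) ->
  cost x - gd d b = S1 x d b + S2 x b.
Proof.
move=> Hx; rewrite /cost /gd /S1 /S2.
have E1 : \sum_(i : Dn) \sum_(j : Fc) (l i j + b j - d i) * x i j =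
   \sum_(i : Dn) \sum_(j : Fc) l i j * x i j
   + \sum_(i : Dn) \sum_(j : Fc) b j * x i j
   - \sum_(i : Dn) \sum_(j : Fc) d i * x i j.
  rewrite -big_split -sumrB /=; apply: eq_bigr => i _.
  rewrite -big_split -sumrB /=; apply: eq_bigr => j _.
  by rewrite mulrBl mulrDl.
have E2 : \sum_(i : Dn) \sum_(j : Fc) d i * x i j = \sum_(i : Dn) Dm i * d i.
  by apply: eq_bigr => i _; rewrite -mulr_sumr Hx mulrC.
have E3 : \sum_(i : Dn) \sum_(j : Fc) b j * x i j =
    \sum_(j : Fc) b j * \sum_(i : Dn) x i j.
  rewrite exchange_big /=; apply: eq_bigr => j _; by rewrite mulr_sumr.
have E4 : \sum_(j : Fc) b j * (C j - \sum_(i : Dn) x i j) =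
   \sum_(j : Fc) C j * b j - \sum_(j : Fc) b j * \sum_(i : Dn) x i j.
  rewrite -sumrB; apply: eq_bigr => j _; by rewrite mulrBr mulrC.
rewrite E1 E2 E3 E4; lra.
Qed.

Lemma minl (a c : R) : Num.min a c <= a.
Proof. by rewrite ge_min lexx. Qed.
Lemma minr (a c : R) : Num.min a c <= c.
Proof. by rewrite ge_min lexx orbT. Qed.

Lemma delay_le b i j : delay l b i <= l i j + b j.
Proof.
rewrite /delay; case: pickP => [j0 _|H]; first exact: bigmin_le.
by have := H j.
Qed.

Lemma le_delay b i a (j1 : Fc) : (forall j, a <= l i j + b j) -> a <= delay l b i.
Proof.
move=> H; rewrite /delay; case: pickP => [j0 _|H0]; last by have := H0 j1.
by apply: le_bigmin => // j _.
Qed.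

Lemma delay_min b1 b2 i (j1 : Fc) :
  delay l (fun j => Num.min (b1 j) (b2 j)) i = Num.min (delay l b1 i) (delay l b2 i).
Proof.
apply/le_anti/andP; split.
  rewrite le_min; apply/andP; split; apply: (le_delay _ _ _ j1) => j;
  apply: (le_trans (delay_le _ _ j)); rewrite lerD2l; [exact: minl | exact: minr].
apply: (le_delay _ _ _ j1) => j.
case: (leP (b1 j) (b2 j)) => _.
  exact: (le_trans (minl _ _) (delay_le _ _ _)).
exact: (le_trans (minr _ _) (delay_le _ _ _)).
Qed.

Lemma eq_delay x b i j : equilibrium l Dm C x b -> 0 < x i j ->
  l i j + b j = delay l b i.
Proof.
move=> [_ [_ [H _]]] Hx; apply/le_anti/andP; split; last exact: delay_le.
exact: (le_delay _ _ _ j (H _ _ Hx)).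
Qed.

Lemma S1_ge0 x d b : (forall i j, 0 <= x i j) -> (forall i j, d i <= l i j + b j) ->
  0 <= S1 x d b.
Proof.
move=> Hx Hd; apply: sumr_ge0 => i _; apply: sumr_ge0 => j _.
by apply: mulr_ge0 => //; rewrite subr_ge0.
Qed.

Lemma S2_ge0 x b : (forall j, 0 <= b j) -> (forall j, \sum_(i : Dn) x i j <= C j) ->
  0 <= S2 x b.
Proof.
move=> Hb Hx; apply: sumr_ge0 => j _.
by apply: mulr_ge0 => //; rewrite subr_ge0.
Qed.

Lemma S1_eq0 x b : equilibrium l Dm C x b -> S1 x (delay l b) b = 0.
Proof.
move=> He; apply: big1 => i _; apply: big1 => j _.
have [[Hx _] _] := He.
have := Hx i j; rewrite le_eqVlt => /orP[/eqP <-|Hp]; first by rewrite mulr0.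
by rewrite (@eq_delay x b i j He Hp) subrr mul0r.
Qed.

Lemma S2_eq0 x b : equilibrium l Dm C x b -> S2 x b = 0.
Proof.
move=> [[_ [_ Hc]] [_ [_ H4]]]; apply: big1 => j _.
have := Hc j; rewrite le_eqVlt => /orP[/eqP ->|Hp]; first by rewrite subrr mulr0.
by rewrite (H4 _ Hp) mul0r.
Qed.


Lemma tot_eq b b' : (forall k, delay l b' k <= delay l b k) -> (forall k, 0 < Dm k) ->
  total_delay l Dm b <= total_delay l Dm b' -> forall k, delay l b k = delay l b' k.
Proof.
move=> Hle HD Ht k.
have H0 : \sum_(k : Dn) Dm k * (delay l b k - delay l b' k) = 0.
  apply/le_anti/andP; split.
    rewrite (eq_bigr (fun k => Dm k * delay l b k - Dm k * delay l b' k));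
      last by move=> ? _; rewrite mulrBr.
    by rewrite sumrB subr_le0.
  by apply: sumr_ge0 => ? _; apply: mulr_ge0; [exact: ltW | rewrite subr_ge0].
have /eqP : Dm k * (delay l b k - delay l b' k) = 0.
  apply: (psumr_eq0P _ H0) => // ? _.
  by apply: mulr_ge0; [exact: ltW | rewrite subr_ge0].
by rewrite mulf_eq0 subr_eq0 (gt_eqF (HD k)) /= => /eqP.
Qed.
End Helpers.
Arguments cost {R Dn Fc} l x.
Arguments gd {R Dn Fc} Dm C d b.
Arguments S1 {R Dn Fc} l x d b.
Arguments S2 {R Dn Fc} C x b.
Arguments slack_id {R Dn Fc l Dm C x} d b.
Arguments S1_ge0 {R Dn Fc l x d b}.
Arguments S2_ge0 {R Dn Fc C} x {b}.
Arguments delay_le {R Dn Fc} l b i j.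
Arguments delay_min {R Dn Fc} l b1 b2 i j1.
Arguments tot_eq {R Dn Fc l Dm b b'}.
Arguments S1_eq0 {R Dn Fc l Dm C x b}.
Arguments S2_eq0 {R Dn Fc l Dm C x b}.

Theorem corollary3p5 (R : realFieldType) (Dn Fc : finType)
  (l : Dn -> Fc -> R) (Dm : Dn -> R) (C : Fc -> R) :
  (forall i j, 0 <= l i j) ->
  (forall i, 0 < Dm i) ->
  (forall j, 0 <= C j) ->
  \sum_(i : Dn) Dm i <= \sum_(j : Fc) C j ->
  forall (x1 x2 : Dn -> Fc -> R) (beta1 beta2 : Fc -> R),
    min_delay_equilibrium l Dm C x1 beta1 ->
    min_delay_equilibrium l Dm C x2 beta2 ->
    forall i, delay l beta1 i = delay l beta2 i.
Proof.
move=> Hl HD HC Hsum x1 x2 b1 b2 [He1 Hm1] [He2 Hm2] i.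
have [[X1p [X1r X1c]] [B1p _]] := He1.
have [[X2p [X2r X2c]] [B2p _]] := He2.
have [j0 _] : exists j0 : Fc, true.
  case: (pickP (fun _ : Fc => true)) => [j0 _|H]; first by exists j0.
  have := X1r i; rewrite big1 => [E|j _]; last by have := H j.
  by have := HD i; rewrite -E ltxx.
set d1 := delay l b1; set d2 := delay l b2.
set bm := fun j => Num.min (b1 j) (b2 j).
set bM := fun j => Num.max (b1 j) (b2 j).
set dM := fun k => Num.max (d1 k) (d2 k).
have Edm : forall k, delay l bm k = Num.min (d1 k) (d2 k).
  by move=> k; apply: delay_min.
have Z11 : cost l x1 - gd Dm C d1 b1 = 0.
  by rewrite (slack_id d1 b1 X1r) (S1_eq0 He1) (S2_eq0 He1) addr0.
have Z22 : cost l x2 - gd Dm C d2 b2 = 0.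
  by rewrite (slack_id d2 b2 X2r) (S1_eq0 He2) (S2_eq0 He2) addr0.
have P12 : 0 <= cost l x1 - gd Dm C d2 b2.
  rewrite (slack_id _ _ X1r); apply: addr_ge0.
    by apply: S1_ge0 => // ? ?; exact: delay_le.
  exact: S2_ge0.
have P21 : 0 <= cost l x2 - gd Dm C d1 b1.
  rewrite (slack_id _ _ X2r); apply: addr_ge0.
    by apply: S1_ge0 => // ? ?; exact: delay_le.
  exact: S2_ge0.
have Bm0 : forall j, 0 <= bm j by move=> j; rewrite /bm le_min B1p B2p.
have Pm : 0 <= cost l x1 - gd Dm C (delay l bm) bm.
  rewrite (slack_id _ _ X1r); apply: addr_ge0.
    by apply: S1_ge0 => // ? ?; exact: delay_le.
  exact: S2_ge0.
have PM : 0 <= cost l x1 - gd Dm C dM bM.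
  rewrite (slack_id _ _ X1r); apply: addr_ge0.
    apply: S1_ge0 => // k j; rewrite /dM ge_max; apply/andP; split;
    apply: (le_trans (delay_le _ _ _ j)); rewrite lerD2l le_max lexx ?orbT //.
  apply: S2_ge0 => // j; rewrite /bM le_max B1p //.
have Esum : gd Dm C d1 b1 + gd Dm C d2 b2 = gd Dm C (delay l bm) bm + gd Dm C dM bM.
  rewrite /gd.
  have A : \sum_(k : Dn) Dm k * d1 k + \sum_(k : Dn) Dm k * d2 k =
     \sum_(k : Dn) Dm k * delay l bm k + \sum_(k : Dn) Dm k * dM k.
    rewrite -!big_split; apply: eq_bigr => k _.
    by rewrite /= Edm /dM -!mulrDr addr_min_max.
  have B : \sum_(j : Fc) C j * b1 j + \sum_(j : Fc) C j * b2 j =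
     \sum_(j : Fc) C j * bm j + \sum_(j : Fc) C j * bM j.
    rewrite -!big_split; apply: eq_bigr => j _.
    by rewrite /= /bm /bM -!mulrDr addr_min_max.
  lra.
have Gm : S1 l x1 (delay l bm) bm + S2 C x1 bm = 0.
  rewrite -(slack_id _ _ X1r); lra.
have G1 : S1 l x1 (delay l bm) bm = 0.
  have := S1_ge0 X1p (fun k j => delay_le l bm k j).
  have := S2_ge0 x1 Bm0 X1c; lra.
have G2 : S2 C x1 bm = 0.
  have := S1_ge0 X1p (fun k j => delay_le l bm k j).
  have := S2_ge0 x1 Bm0 X1c; lra.
have Eqm : equilibrium l Dm C x1 bm.
  split; first by [].
  split; first by [].
  split.
    move=> k j Hp j'.
    have T : (l k j + bm j - delay l bm k) * x1 k j = 0.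
      have Hi : \sum_(j : Fc) (l k j + bm j - delay l bm k) * x1 k j = 0.
        apply: (psumr_eq0P _ G1) => // k' _; apply: sumr_ge0 => j'' _.
        by apply: mulr_ge0 => //; rewrite subr_ge0 delay_le.
      apply: (psumr_eq0P _ Hi) => // j'' _.
      by apply: mulr_ge0 => //; rewrite subr_ge0 delay_le.
    move/eqP: T; rewrite mulf_eq0 (gt_eqF Hp) orbF subr_eq0 => /eqP ->.
    exact: delay_le.
  move=> j Hlt.
  have T : bm j * (C j - \sum_(k : Dn) x1 k j) = 0.
    apply: (psumr_eq0P _ G2) => // j' _.
    by apply: mulr_ge0 => //; rewrite subr_ge0.
  move/eqP: T; rewrite mulf_eq0 subr_eq0 (gt_eqF Hlt) orbF => /eqP //.
have F1 : d1 i = delay l bm i.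
  apply: (tot_eq _ HD (Hm1 _ _ Eqm)) => k; by rewrite Edm ge_min lexx.
have F2 : d2 i = delay l bm i.
  apply: (tot_eq _ HD (Hm2 _ _ Eqm)) => k; by rewrite Edm ge_min lexx orbT.
by rewrite F1 F2.
Qed.
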